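(* Let $V$ be a finite-dimensional vector space, $\pi\in\wedge^2V$, and $V_1,V_2\subset V$ subspaces with $\pi(V_1^0,V_2^0)=0$. For $j=1,2$ let $\rho_j:V\to V/V_j$ be the projections. Assume $U\subset V$ is a subspace that is coisotropic with respect to $\pi$ and such that $\rho_1|_U:U\to V/V_1$ is an isomorphism, and let $\psi=\rho_2\circ(\rho_1|_U)^{-1}:V/V_1\to V/V_2$. Then $\psi(\rho_1(\pi))=-\rho_2(\pi)$ in $\wedge^2(V/V_2)$.
   Context: For a subspace $U_1\subset V$, $U_1^0=\{\xi\in V^*:\xi|_{U_1}=0\}$. $\pi(\xi,\eta)$ denotes the pairing of $\pi\in\wedge^2V$ with $\xi,\eta\in V^*$. For subspaces $U_1,U_2\subset V$, $U_1\wedge U_2=\wedge^2V\cap(U_1\otimes U_2+U_2\otimes U_1)$, and $U_1$ is coisotropic with respect to $\pi$ if $\pi\in U_1\wedge V$. Linear maps act on $\wedge^2$ in the induced way. *)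

(* Defs.v *)
From HB Require Import structures.
From mathcomp Require Import all_boot all_order all_algebra.
Set Implicit Arguments. Unset Strict Implicit. Unset Printing Implicit Defensive.
Import GRing.Theory.
Local Open Scope ring_scope.

(* Conventions: V = K^n as row vectors 'rV[K]_n; V^* = column vectors 'cV[K]_n
   with pairing v *m xi.  A bivector pi = sum_{i,j} P i j e_i (x) e_j in V (x) V
   is encoded by its coefficient matrix P : 'M_n; pi(xi,eta) = xi^T P eta.
   A linear map v |-> v *m A (A : 'M_(n,m)) acts on V (x) V by P |-> A^T P A.
   Subspaces of V are encoded by matrices whose row space is the subspace. *)

Definition alternating (K : fieldType) (n : nat) (P : 'M[K]_n) : Prop :=
  P^T = - P /\ forall i, P i i = 0.

Definition bipair (K : fieldType) (n : nat) (P : 'M[K]_n) (xi eta : 'cV[K]_n)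
  : K := (xi^T *m P *m eta) 0 0.

Definition wedge2_map (K : fieldType) (n m : nat) (A : 'M[K]_(n, m))
  (P : 'M[K]_n) : 'M[K]_m := A^T *m P *m A.

(* U (x) V = matrices all of whose columns lie in U, i.e. (M^T <= U);
   V (x) U = matrices all of whose rows lie in U, i.e. (M <= U).
   U /\ V = wedge^2 V intersected with (U (x) V + V (x) U). *)
Definition in_wedge_UV (K : fieldType) (n p : nat) (U : 'M[K]_(p, n))
  (P : 'M[K]_n) : Prop :=
  alternating P /\
  exists A B : 'M[K]_n, P = A + B /\ (A^T <= U)%MS /\ (B <= U)%MS.

Definition coisotropic (K : fieldType) (n p : nat) (U : 'M[K]_(p, n))
  (P : 'M[K]_n) : Prop := in_wedge_UV U P.

(* Main.v *)
Require Import Defs.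
From HB Require Import structures.
From mathcomp Require Import all_boot all_order all_algebra.
Import GRing.Theory.
Local Open Scope ring_scope.

Lemma col_mul (K : fieldType) m n p (A : 'M[K]_(m,n)) (B : 'M[K]_(n,p)) j :
  col j (A *m B) = A *m col j B.
Proof. by rewrite !colE mulmxA. Qed.

Lemma entry_bipair (K : fieldType) n a b (P : 'M[K]_n) (X : 'M_(n,a)) (Y : 'M_(n,b)) i j :
  (X^T *m P *m Y) i j = bipair P (col i X) (col j Y).
Proof.
by rewrite /bipair tr_col -row_mul -col_mul -row_mul [RHS]mxE [RHS]mxE.
Qed.

Lemma ker_mx (K : fieldType) n m p (V : 'M[K]_(p,n)) (R : 'M[K]_(n,m)) :
  (forall v : 'rV[K]_n, v *m R = 0 <-> (v <= V)%MS) -> V *m R = 0.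
Proof.
move=> H; apply/row_matrixP => i; rewrite row_mul row0; apply/H; exact: row_sub.
Qed.

Lemma annih (K : fieldType) n p1 p2 a b (P : 'M[K]_n) (V1 : 'M[K]_(p1,n)) (V2 : 'M[K]_(p2,n))
  (X : 'M_(n,a)) (Y : 'M_(n,b)) :
  (forall xi eta : 'cV[K]_n, V1 *m xi = 0 -> V2 *m eta = 0 -> bipair P xi eta = 0) ->
  V1 *m X = 0 -> V2 *m Y = 0 -> X^T *m P *m Y = 0.
Proof.
move=> H hX hY; apply/matrixP => i j; rewrite entry_bipair mxE; apply: H.
  by rewrite -col_mul hX; apply/matrixP => k l; rewrite !mxE.
by rewrite -col_mul hY; apply/matrixP => k l; rewrite !mxE.
Qed.

Lemma cois (K : fieldType) n q a b (P : 'M[K]_n) (U : 'M[K]_(q,n))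
  (X : 'M_(n,a)) (Y : 'M_(n,b)) :
  coisotropic U P -> U *m X = 0 -> U *m Y = 0 -> X^T *m P *m Y = 0.
Proof.
move=> [_ [A [B [-> [/submxP [Z hA] /submxP [Z' hB]]]]]] hX hY.
rewrite mulmxDr mulmxDl hB.
have -> : X^T *m (Z' *m U) *m Y = 0 by rewrite -!mulmxA hY !mulmx0.
rewrite addr0.
have -> : X^T *m A = (A^T *m X)^T by rewrite trmx_mul trmxK.
by rewrite hA -mulmxA hX mulmx0 trmx0 mul0mx.
Qed.

Lemma skew_zero (K : fieldType) n a b (P : 'M[K]_n) (X : 'M_(n,a)) (Y : 'M_(n,b)) :
  P^T = - P -> X^T *m P *m Y = 0 -> Y^T *m P *m X = 0.
Proof.
move=> Pt h; apply: trmx_inj; rewrite !trmx_mul trmxK Pt trmx0 mulNmx mulmxN mulmxA h.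
by rewrite oppr0.
Qed.

Theorem lemmaA2 (K : fieldType) (n m1 m2 p1 p2 q : nat)
  (P : 'M[K]_n) (V1 : 'M[K]_(p1, n)) (V2 : 'M[K]_(p2, n)) (U : 'M[K]_(q, n))
  (R1 : 'M[K]_(n, m1)) (R2 : 'M[K]_(n, m2)) (Psi : 'M[K]_(m1, m2)) :
  (* pi in wedge^2 V *)
  alternating P ->
  (* pi(V1^0, V2^0) = 0 *)
  (forall xi eta : 'cV[K]_n, V1 *m xi = 0 -> V2 *m eta = 0 ->
     bipair P xi eta = 0) ->
  (* rho_j : V -> V/V_j : surjective linear maps with kernel V_j *)
  (forall v : 'rV[K]_n, v *m R1 = 0 <-> (v <= V1)%MS) ->
  (forall w : 'rV[K]_m1, exists v : 'rV[K]_n, v *m R1 = w) ->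
  (forall v : 'rV[K]_n, v *m R2 = 0 <-> (v <= V2)%MS) ->
  (forall w : 'rV[K]_m2, exists v : 'rV[K]_n, v *m R2 = w) ->
  (* U coisotropic *)
  coisotropic U P ->
  (* rho_1|_U : U -> V/V1 is an isomorphism *)
  (forall u : 'rV[K]_n, (u <= U)%MS -> u *m R1 = 0 -> u = 0) ->
  (forall w : 'rV[K]_m1, exists2 u : 'rV[K]_n, (u <= U)%MS & u *m R1 = w) ->
  (* psi = rho_2 o (rho_1|_U)^{-1}, i.e. psi o rho_1 = rho_2 on U *)
  (forall u : 'rV[K]_n, (u <= U)%MS -> u *m R1 *m Psi = u *m R2) ->
  wedge2_map Psi (wedge2_map R1 P) = - wedge2_map R2 P.
Proof.
move=> [Pt Pd] hV hR1 _ hR2 _ hU hinj hsurj hPsi.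
have hS : forall i : 'I_m1, exists u : 'rV[K]_n,
    (u <= U)%MS && (u *m R1 == delta_mx 0 i).
  move=> i; have [u uU uR] := hsurj (delta_mx 0 i).
  by exists u; rewrite uU uR eqxx.
pose S : 'M[K]_(m1, n) := \matrix_(i < m1) xchoose (hS i).
have rowS i : (row i S <= U)%MS && (row i S *m R1 == delta_mx 0 i).
  by rewrite rowK; exact: (xchooseP (hS i)).
have SU : (S <= U)%MS by apply/row_subP => i; case/andP: (rowS i).
have SR1 : S *m R1 = 1%:M.
  apply/row_matrixP => i; rewrite row_mul row1.
  by case/andP: (rowS i) => _ /eqP.
have ePsi : Psi = S *m R2.
  rewrite -[Psi]mul1mx -SR1; apply/row_matrixP => i.
  rewrite !row_mul hPsi //; exact: submx_trans (row_sub i S) SU.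
pose D : 'M[K]_n := 1%:M - R1 *m S.
have UD : U *m D = 0.
  apply/row_matrixP => i; rewrite row_mul row0 /D mulmxBr mulmx1.
  have uU : (row i U <= U)%MS := row_sub i U.
  apply: hinj.
    apply: addmx_sub => //; rewrite eqmx_opp.
    rewrite mulmxA; exact: submx_trans (submxMl _ _) SU.
  by rewrite mulmxBl -!mulmxA SR1 mulmx1 subrr.
pose X := R1 *m S *m R2.
pose Y := D *m R2.
have hXY : R2 = X + Y by rewrite /X /Y /D mulmxBl mul1mx addrC subrK.
have V1R1 := @ker_mx _ _ _ _ _ _ hR1.
have V2R2 := @ker_mx _ _ _ _ _ _ hR2.
have V1X : V1 *m X = 0 by rewrite /X !mulmxA V1R1 !mul0mx.
have UY : U *m Y = 0 by rewrite /Y mulmxA UD mul0mx.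
have h1 : X^T *m P *m R2 = 0 := @annih _ _ _ _ _ _ _ _ _ _ _ hV V1X V2R2.
have h2 : R2^T *m P *m X = 0.
  exact: (@skew_zero _ _ _ _ P X R2 Pt h1).
have h3 : Y^T *m P *m Y = 0 := @cois _ _ _ _ _ _ _ _ _ hU UY UY.
have -> : wedge2_map Psi (wedge2_map R1 P) = X^T *m P *m X.
  by rewrite /wedge2_map ePsi /X !trmx_mul !mulmxA.
have h1' : X^T *m P *m (X + Y) = 0 by rewrite -hXY.
have h2' : (X + Y)^T *m P *m X = 0 by rewrite -hXY.
have e : wedge2_map R2 P = (X + Y)^T *m P *m (X + Y) by rewrite -hXY.
rewrite e; move: h1' h2'; rewrite [(X + Y)^T]raddfD /= !mulmxDl !mulmxDr h3 addr0.
move=> h1' h2'.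
have hb : X^T *m P *m Y = - (X^T *m P *m X) by apply/eqP; rewrite -addr_eq0 addrC h1'.
have hc : Y^T *m P *m X = - (X^T *m P *m X) by apply/eqP; rewrite -addr_eq0 addrC h2'.
by rewrite hb hc subrr add0r opprK.
Qed.
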